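(* For every $d\in(0,1]$ there is $\varepsilon_0>0$ such that for every $\varepsilon\in(0,\varepsilon_0]$ there is $r_0$ such that for every $r\ge r_0$ there is $\zeta_0>0$ such that for every $\zeta\in(0,\zeta_0]$ there is $n_0$ such that the following holds for all $n\ge n_0$. Let $G$ be an $n$-vertex graph with a partition $V(G)=V_1\sqcup\dots\sqcup V_r$ satisfying $\big||V_i|-|V_j|\big|\le1$ for all $i,j$, and let $R$ be the $(\varepsilon,d)$-reduced graph of $G$ with respect to this partition. Suppose $R$ is connected and non-bipartite. Then there is an odd integer $L\le 2r$ such that for all $i,j\in V(R)$ (not necessarily distinct) and all sets $X\subseteq V_i$ with $|X|\ge d|V_i|$ and $Y\subseteq V_j$ with $|Y|\ge d|V_j|$, $G$ contains at least $\zeta n^{L+1}$ paths of length $L$ starting in $X$ and ending in $Y$.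
   Context: For nonempty disjoint vertex sets $X,Y$ of a graph $G$, the density is $d_G(X,Y)=e_G(X,Y)/(|X||Y|)$. A pair $(A,B)$ of disjoint nonempty vertex sets is $\varepsilon$-regular if $|d_G(A,B)-d_G(A',B')|\le\varepsilon$ for all $A'\subseteq A$, $B'\subseteq B$ with $|A'|\ge\varepsilon|A|$, $|B'|\ge\varepsilon|B|$. Given a partition $V(G)=V_1\sqcup\dots\sqcup V_r$, the $(\varepsilon,d)$-reduced graph $R$ has vertex set $[r]$, with $ij\in E(R)$ iff $(V_i,V_j)$ is $\varepsilon$-regular of density at least $d$. The length of a path is its number of edges; paths are counted as sequences of distinct vertices. *)

(* Defs.v *)
From HB Require Import structures.
From mathcomp Require Import all_boot all_order all_algebra.
From mathcomp Require Import boolp reals.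
Set Implicit Arguments. Unset Strict Implicit. Unset Printing Implicit Defensive.
Import Order.TTheory GRing.Theory Num.Theory.
Local Open Scope ring_scope.

Section Defs.
Variable R : realType.
Variable T : finType.
Variable e : rel T.

Definition edges_between (X Y : {set T}) : nat :=
  #|[set p : T * T | [&& p.1 \in X, p.2 \in Y & e p.1 p.2]]|.

Definition density (X Y : {set T}) : R :=
  (edges_between X Y)%:R / (#|X| * #|Y|)%:R.

Definition eps_regular (eps : R) (A B : {set T}) : Prop :=
  forall A' B' : {set T}, A' \subset A -> B' \subset B ->
    eps * #|A|%:R <= #|A'|%:R -> eps * #|B|%:R <= #|B'|%:R ->
    `|density A B - density A' B'| <= eps.

Definition reduced_adj (r : nat) (V : 'I_r -> {set T}) (eps d : R)
    (i j : 'I_r) : Prop :=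
  i != j /\ eps_regular eps (V i) (V j) /\ d <= density (V i) (V j).

Definition reduced_rel (r : nat) (V : 'I_r -> {set T}) (eps d : R) : rel 'I_r :=
  fun i j => `[< reduced_adj V eps d i j >].

Definition num_paths (L : nat) (X Y : {set T}) : nat :=
  #|[set f : {ffun 'I_L.+1 -> T} |
      [&& injectiveb f,
          [forall k : 'I_L, e (f (widen_ord (leqnSn L) k)) (f (lift ord0 k))],
          f ord0 \in X & f ord_max \in Y]]|.
End Defs.

Definition rel_connected (r : nat) (E : rel 'I_r) : Prop :=
  forall i j : 'I_r, connect E i j.

Definition rel_bipartite (r : nat) (E : rel 'I_r) : Prop :=
  exists c : 'I_r -> bool, forall i j, E i j -> c i != c j.

(* Main.v *)
Require Import Defs.
From HB Require Import structures.
From mathcomp Require Import all_boot all_order all_algebra.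
From mathcomp Require Import boolp reals.
Import Order.TTheory GRing.Theory Num.Theory.
Local Open Scope ring_scope.
Set Implicit Arguments. Unset Strict Implicit.

Section Edges.
Variable (T : finType) (e : rel T).

Lemma card_cond (B : {set T}) (P : pred T) :
  #|[set y in B | P y]| = (\sum_(y in B) (P y : nat))%N.
Proof.
rewrite -sum1_card big_mkcond [RHS]big_mkcond /=.
by apply: eq_bigr => y _; rewrite inE; case: (y \in B); case: (P y).
Qed.

Lemma edgesE (A B : {set T}) :
  edges_between e A B = (\sum_(x in A) #|[set y in B | e x y]|)%N.
Proof.
rewrite /edges_between -sum1_card.
rewrite (eq_bigr (fun x => \sum_(y | (y \in B) && e x y) 1)%N); last first.
  by move=> x _; rewrite -sum1_card; apply: eq_bigl => y; rewrite inE.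
by rewrite pair_big_dep; apply: eq_bigl => -[x y]; rewrite !inE.
Qed.

Lemma edges_sym (He : symmetric e) A B : edges_between e A B = edges_between e B A.
Proof.
rewrite !edgesE (eq_bigr (fun x => \sum_(y in B) (e x y : nat))%N); last first.
  by move=> x _; rewrite card_cond.
rewrite [RHS](eq_bigr (fun x => \sum_(y in A) (e x y : nat))%N); last first.
  by move=> x _; rewrite card_cond.
rewrite exchange_big; apply: eq_bigr => y _; apply: eq_bigr => x _.
by rewrite He.
Qed.

Lemma density_sym (R : realType) (He : symmetric e) A B :
  density R e A B = density R e B A.
Proof. by rewrite /density (edges_sym He A B) (mulnC #|A|). Qed.

Lemma reg_sym (R : realType) (He : symmetric e) (eps : R) A B :
  eps_regular e eps A B -> eps_regular e eps B A.
Proof.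
move=> H B' A' sB sA hB hA.
rewrite (density_sym R He B A) (density_sym R He B' A').
exact: (H A' B' sA sB hA hB).
Qed.

Lemma rr_sym (R : realType) (He : symmetric e) r (V : 'I_r -> {set T}) (eps d : R) :
  symmetric (reduced_rel e V eps d).
Proof.
suff H : forall i j, reduced_rel e V eps d i j -> reduced_rel e V eps d j i.
  by move=> i j; apply/idP/idP; apply: H.
move=> i j /asboolP [nij [reg dd]]; apply/asboolP; split; first by rewrite eq_sym.
split; first exact: reg_sym.
by rewrite density_sym.
Qed.
End Edges.

Section Walk.
Variable (r : nat) (E : rel 'I_r).
Hypothesis Esym : symmetric E.

Fixpoint W (l : nat) (i j : 'I_r) : bool :=
  if l is l'.+1 then [exists k, E i k && W l' k j] else i == j.

Definition pe : rel ('I_r * bool) := fun x y => E x.1 y.1 && (y.2 == ~~ x.2).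

Lemma lift_conn i j : connect E i j -> exists c, forall b, connect pe (i, b) (j, b (+) c).
Proof.
case/connectP => p; elim: p i => [|k p IH] i /=.
  by move=> _ ->; exists false => b; rewrite addbF.
case/andP => Eik pth Ej; have [c Hc] := IH k pth Ej.
exists (~~ c) => b.
apply: (connect_trans (connect1 (y := (k, ~~ b)) _)); first by rewrite /pe /= Eik eqxx.
by rewrite addbN -addNb.
Qed.

Lemma pe_walk x p : path pe x p ->
  W (size p) x.1 (last x p).1 && ((last x p).2 == x.2 (+) odd (size p)).
Proof.
elim: p x => [|y p IH] x /=; first by rewrite addbF !eqxx.
case/andP => pxy pth; move: pxy; rewrite /pe => /andP [Exy /eqP ey]; have /andP [Wy ly] := IH y pth.
apply/andP; split; first by apply/existsP; exists y.1; rewrite Exy.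
by rewrite (eqP ly) ey addNb -addbN.
Qed.

Hypothesis conn : forall i j, connect E i j.
Hypothesis nb : ~ (exists c : 'I_r -> bool, forall i j, E i j -> c i != c j).

Lemma all_odd i j : connect pe (i, false) (j, true).
Proof.
have [b0 [H0 H1]] : exists b0, connect pe (i, false) (b0, false) /\
                              connect pe (i, false) (b0, true).
  case: (pselect (exists b0, connect pe (i, false) (b0, false) /\
                              connect pe (i, false) (b0, true))) => // nH.
  exfalso; apply: nb; exists (fun x => connect pe (i, false) (x, false)) => a b Eab.
  have key x : connect pe (i, false) (x, false) -> connect pe (i, false) (x, true) -> False.
    by move=> H H'; apply: nH; exists x.
  case Ha: (connect pe (i, false) (a, false)).
    have Hbt : connect pe (i, false) (b, true).
      by apply: (connect_trans Ha); apply: connect1; rewrite /pe /= Eab.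
    by case Hb: (connect pe (i, false) (b, false)) => //; case: (key b Hb Hbt).
  have [c Hc] := lift_conn (conn i a); have := Hc false; rewrite addFb.
  case: c {Hc} => Hac; last by rewrite Hac in Ha.
  have -> // : connect pe (i, false) (b, false).
  by apply: (connect_trans Hac); apply: connect1; rewrite /pe /= Eab.
have [c Hc] := lift_conn (conn b0 j); have := Hc (~~ c); rewrite addNb addbb /=.
by case: c {Hc} => H; [exact: connect_trans H0 H | exact: connect_trans H1 H].
Qed.

Lemma odd_walk i j : exists l, [/\ odd l, (l <= (2 * r).-1)%N & W l i j].
Proof.
case/connectP: (all_odd i j) => p pth lst.
case/shortenP: pth lst => p' pth' uq _ lst.
have /andP [Wl ol] := pe_walk pth'.
exists (size p'); split.
- by move: ol; rewrite -lst /=.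
- have := max_card (mem (((i, false) :: p') : seq ('I_r * bool))).
  rewrite (card_uniqP uq) card_prod card_ord card_bool /= mulnC.
  by case: (2 * r)%N.
- by rewrite -lst in Wl.
Qed.

Lemma W_pad2 l i j k : W l i j -> E j k -> W l.+2 i j.
Proof.
elim: l i => [|l IH] i /=.
  move/eqP => -> Ejk; apply/existsP; exists k; rewrite Ejk /=.
  by apply/existsP; exists j; rewrite Esym Ejk eqxx.
case/existsP => k' /andP [Eik Wl] Ejk; apply/existsP; exists k'.
by apply/andP; split => //; exact: (IH k' Wl Ejk).
Qed.

Lemma full_walk i j : (0 < r)%N -> W (2 * r).-1 i j.
Proof.
move=> r0.
have [l [ol hl Wl]] := odd_walk i j.
have [l' [ol' _ Wjj]] := odd_walk j j.
have [k Ejk] : exists k, E j k.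
  by case: l' ol' Wjj => // l'' _ /= /existsP [k /andP [Ejk _]]; exists k.
have oL : odd (2 * r).-1 by case: r r0 => // r' _; rewrite mulnS add2n /= oddM.
have [m ->] : exists m, (2 * r).-1 = (l + 2 * m)%N.
  have e2 : ~~ odd ((2 * r).-1 - l) by rewrite oddB // ol oL.
  have := odd_double_half ((2 * r).-1 - l); rewrite (negbTE e2) add0n => h.
  by exists (((2 * r).-1 - l)./2); rewrite -mul2n in h; rewrite h subnKC.
elim: m => [|m IH]; first by rewrite muln0 addn0.
by rewrite mulnS addnA addn2; apply: W_pad2 IH Ejk.
Qed.
End Walk.
From mathcomp Require Import lra ring.
Local Open Scope ring_scope.

Section Count.
Variables (R : realType) (T : finType) (e : rel T).

Definition Pp (U : {set T}) (v : T) (Y : {set T}) (l : nat) (s : seq T) : bool :=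
  [&& size s == l, path e v s, uniq (v :: s), all (fun x => x \notin U) (v :: s)
    & last v s \in Y].

Definition prop (Z Y : {set T}) (l Lm : nat) (beta : R) : Prop :=
  forall v, v \in Z -> forall U : {set T}, v \notin U -> (#|U| + l <= Lm)%N ->
  exists ss : seq (seq T),
    [/\ uniq ss, all (Pp U v Y l) ss & beta ^+ l <= (size ss)%:R].

Lemma prop0 Y Lm beta : prop Y Y 0 Lm beta.
Proof.
move=> v vY U vU _; exists [:: [::]]; split; [by [] | | by rewrite expr0 lexx].
by rewrite /Pp /= vU vY.
Qed.

Lemma extend (Zo Y : {set T}) (l Lm : nat) (beta : R) (v : T) : 0 <= beta ->
  beta + Lm%:R <= #|[set w in Zo | e v w]|%:R -> prop Zo Y l Lm beta ->
  forall U : {set T}, v \notin U -> (#|U| + l.+1 <= Lm)%N ->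
  exists ss, [/\ uniq ss, all (Pp U v Y l.+1) ss & beta ^+ l.+1 <= (size ss)%:R].
Proof.
move=> b0 hN pZ U vU hU.
set A := [set w in Zo | [&& e v w, w \notin U & w != v]].
have hf : forall w, exists ss : seq (seq T), w \in A ->
    [/\ uniq ss, all (Pp (v |: U) w Y l) ss & beta ^+ l <= (size ss)%:R].
  move=> w; case: (boolP (w \in A)) => wA; last by exists [::].
  move: (wA); rewrite inE => /and4P [wZ _ wU wv].
  have wU' : w \notin v |: U by rewrite !inE negb_or wv wU.
  have hU' : (#|v |: U| + l <= Lm)%N by rewrite cardsU1 vU add1n addSn -addnS.
  by have [ss H] := pZ w wZ (v |: U) wU' hU'; exists ss => _.
have [f Hf] := choice hf.
exists [seq w :: s | w <- enum A, s <- f w].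
split.
- apply: allpairs_uniq_dep; first exact: enum_uniq.
    by move=> w; rewrite mem_enum => /Hf [].
  by move=> [w1 s1] [w2 s2] _ _ /= [-> ->].
- apply/allP => t /allpairsPdep [w [s [wA sF ->]]].
  move: wA; rewrite mem_enum => wA.
  have [_ /allP aP _] := Hf w wA.
  have := aP s sF; rewrite /Pp => /and5P [sz pth uq /allP al ls].
  move: (wA); rewrite inE => /and4P [wZ evw wU wv].
  have vn : v \notin w :: s.
    by apply/negP => vws; have := al v vws; rewrite !inE eqxx.
  have alU : all (fun x => x \notin U) (w :: s).
    by apply/allP => x xws; have := al x xws; rewrite !inE negb_or => /andP [].
  rewrite /Pp [size _]/= eqSS sz [path _ _ _]/= evw pth [last _ _]/= ls.
  rewrite cons_uniq vn uq.
  have -> : all (fun x => x \notin U) (v :: w :: s) =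
    (v \notin U) && all (fun x => x \notin U) (w :: s) by [].
  rewrite vU alU.
  done.
- rewrite size_allpairs_dep sumnE big_map natr_sum.
  have h : \sum_(w <- enum A) beta ^+ l <= \sum_(w <- enum A) (size (f w))%:R.
    rewrite big_seq [X in _ <= X]big_seq; apply: ler_sum => w.
    by rewrite mem_enum => wA; have [_ _ ->] := Hf w wA.
  apply: le_trans h; rewrite big_enum sumr_const /= -mulr_natr exprS mulrC.
  apply: ler_wpM2l; first exact: exprn_ge0.
  have hc : (#|[set w in Zo | e v w]| <= #|A| + Lm)%N.
    apply: leq_trans (subset_leq_card (_ : _ \subset A :|: (v |: U))) _.
      apply/subsetP => w; rewrite !inE => /andP [wZ evw]; rewrite wZ evw /=.
      by case: (w \in U); case: (w == v).
    rewrite cardsU; apply: leq_trans (leq_subr _ _) _.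
    rewrite leq_add2l cardsU1 vU; apply: leq_trans hU.
    by rewrite addnS /= add1n ltnS leq_addr.
  move: hc; rewrite -(ler_nat R) natrD => hc; lra.
Qed.
End Count.

Section Count2.
Variables (R : realType) (T : finType) (e : rel T).

Lemma good_large r (V : 'I_r -> {set T}) (eps d : R) (i k : 'I_r) (Zo : {set T}) :
  0 < eps -> reduced_rel e V eps d i k -> Zo \subset V k ->
  eps * #|V k|%:R <= #|Zo|%:R ->
  (1 - eps) * #|V i|%:R <=
  #|[set v in V i | (d - eps) * #|Zo|%:R <= #|[set w in Zo | e v w]|%:R]|%:R.
Proof.
move=> ep /asboolP [_ [reg dd]] sZ hZ.
set Zn := [set v in V i | _].
set bad := V i :\: Zn.
have hcard : #|V i| = (#|Zn| + #|bad|)%N.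
  rewrite -(cardsID Zn (V i)) (setIidPr _) //.
  by apply/subsetP => x; rewrite inE => /andP [].
suff hb : #|bad|%:R <= eps * #|V i|%:R.
  move: hb; rewrite hcard natrD mulrBl mul1r => hb; lra.
rewrite leNgt; apply/negP => lt.
have sb : bad \subset V i by apply: subsetDl.
have := reg bad Zo sb sZ (ltW lt) hZ.
rewrite ler_norml => /andP [_ h2].
have dB : d - eps <= density R e bad Zo by lra.
have bpos : 0 < #|bad|%:R :> R.
  by apply: le_lt_trans lt; rewrite mulr_ge0 // ltW.
have [v0 v0b] : exists v0, v0 \in bad.
  by apply/set0Pn; rewrite -card_gt0 -(ltr0n R).
have Nb : forall x, x \in bad ->
    #|[set w in Zo | e x w]|%:R < (d - eps) * #|Zo|%:R.
  move=> x; rewrite !inE negb_and => /andP [/orP [nV|nc] xV].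
    by rewrite xV in nV.
  by rewrite ltNge.
have Zpos : 0 < #|Zo|%:R :> R.
  rewrite ltr0n lt0n; apply/negP => /eqP Z0.
  by have := Nb v0 v0b; rewrite Z0 mulr0n mulr0 ltNge ler0n.
move: dB; rewrite /density edgesE natr_sum natrM ler_pdivlMr ?mulr_gt0 // => h.
have : \sum_(x in bad) (#|[set w in Zo | e x w]|)%:R <
       \sum_(x in bad) ((d - eps) * #|Zo|%:R).
  apply: ltr_sum; last by move=> x xb; apply: Nb.
  by apply/hasP; exists v0; rewrite ?mem_index_enum.
rewrite sumr_const -[_ *+ #|bad|]mulr_natr -mulrA (mulrC #|Zo|%:R) => h'.
lra.
Qed.

Lemma claim r (V : 'I_r -> {set T}) (eps d delta beta : R) (Lm : nat) :
  0 < eps -> eps <= delta -> delta <= 1 - eps -> 0 <= beta -> 0 <= d - eps ->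
  (forall k, beta + Lm%:R <= (d - eps) * (delta * #|V k|%:R)) ->
  forall l i j, W (reduced_rel e V eps d) l i j ->
  forall Y : {set T}, Y \subset V j -> delta * #|V j|%:R <= #|Y|%:R ->
  exists Z : {set T}, [/\ Z \subset V i, delta * #|V i|%:R <= #|Z|%:R,
    (0 < l)%N -> (1 - eps) * #|V i|%:R <= #|Z|%:R & prop e Z Y l Lm beta].
Proof.
move=> ep ed de b0 de0 hk; elim => [|l IH] i j /=.
  by move/eqP => <- Y sY hY; exists Y; split => //; apply: prop0.
case/existsP => k /andP [Eik Wl] Y sY hY.
have [Zo [sZo hZo _ pZo]] := IH k j Wl Y sY hY.
have hZe : eps * #|V k|%:R <= #|Zo|%:R.
  by apply: le_trans hZo; exact: (ler_wpM2r (ler0n R #|V k|) ed).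
have hZn := good_large ep Eik sZo hZe.
set Zn := [set v in V i | _] in hZn.
exists Zn; split.
- by apply/subsetP => x; rewrite inE => /andP [].
- by apply: le_trans hZn; exact: (ler_wpM2r (ler0n R #|V i|) de).
- by move=> _.
- move=> v; rewrite inE => /andP [vV hv] U vU hU.
  apply: (extend b0 _ pZo vU hU).
  apply: le_trans (hk k) _; apply: le_trans hv.
  exact: (ler_wpM2l de0 hZo).
Qed.

Lemma final L (X Z Y : {set T}) (beta : R) : 0 <= beta -> prop e Z Y L L beta ->
  #|X :&: Z|%:R * beta ^+ L <= (num_paths e L X Y)%:R.
Proof.
move=> b0 pZ.
set A := X :&: Z.
have hf : forall x, exists ss : seq (seq T), x \in A ->
    [/\ uniq ss, all (Pp e set0 x Y L) ss & beta ^+ L <= (size ss)%:R].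
  move=> x; case: (boolP (x \in A)) => xA; last by exists [::].
  move: (xA); rewrite inE => /andP [_ xZ].
  have x0U : x \notin (set0 : {set T}) by rewrite inE.
  have hc : (#|(set0 : {set T})| + L <= L)%N by rewrite cards0.
  have [ss H] := pZ x xZ set0 x0U hc.
  by exists ss => _.
have [f Hf] := choice hf.
case: (set_0Vmem A) => [A0|[x0 x0A]].
  by rewrite A0 cards0 mul0r ler0n.
set big := [seq x :: s | x <- enum A, s <- f x].
have hsz : #|A|%:R * beta ^+ L <= (size big)%:R.
  rewrite size_allpairs_dep sumnE big_map natr_sum.
  have h : \sum_(w <- enum A) beta ^+ L <= \sum_(w <- enum A) (size (f w))%:R.
    rewrite big_seq [X in _ <= X]big_seq; apply: ler_sum => w.
    by rewrite mem_enum => wA; have [_ _ ->] := Hf w wA.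
  by apply: le_trans h; rewrite big_enum sumr_const mulr_natl.
have hin : forall t, t \in big -> [/\ size t = L.+1, uniq t, path e (head x0 t) (behead t),
    head x0 t \in X & last (head x0 t) (behead t) \in Y].
  move=> t /allpairsPdep [x [s [xA sF ->]]] /=.
  move: xA; rewrite mem_enum => xA.
  have [_ /allP aP _] := Hf x xA.
  have := aP s sF; rewrite /Pp => /and5P [/eqP sz pth uq _ ls].
  by move: xA; rewrite inE => /andP [xX _]; split => //; rewrite sz.
set F := fun t : seq T => ([ffun k : 'I_L.+1 => nth x0 t k] : {ffun 'I_L.+1 -> T}).
apply: le_trans hsz _; rewrite ler_nat /num_paths.
rewrite -(size_map F) cardE; apply: uniq_leq_size.
  rewrite map_inj_in_uniq.
    apply: allpairs_uniq_dep; first exact: enum_uniq.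
      by move=> w; rewrite mem_enum => /Hf [].
    by move=> [w1 s1] [w2 s2] _ _ /= [-> ->].
  move=> t1 t2 /hin [s1 _ _ _ _] /hin [s2 _ _ _ _] EF.
  apply: (eq_from_nth (x0 := x0)); first by rewrite s1 s2.
  move=> k; rewrite s1 => kL.
  by have := congr1 (fun g : {ffun 'I_L.+1 -> T} => g (Ordinal kL)) EF; rewrite /F !ffunE.
move=> g /mapP [t /hin [sz uq pth hX hY] ->]; rewrite mem_enum inE.
case: t sz uq pth hX hY => // x s [sz] uq pth /= hX hY.
apply/and4P; split.
- apply/injectiveP => k1 k2; rewrite /F !ffunE => /eqP.
  by rewrite nth_uniq /= ?sz ?ltn_ord // => /eqP /val_inj.
- apply/forallP => k; rewrite /F !ffunE /= add0n.
  by apply: (pathP x0 pth); rewrite sz.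
- by rewrite /F ffunE.
- by rewrite /F ffunE /=; move: hY; rewrite (last_nth x0) sz.
Qed.

Lemma part_size r (V : 'I_r -> {set T}) :
  (forall x, exists i, x \in V i) -> (forall i j, #|V i| <= #|V j| + 1)%N ->
  forall i, (#|T| <= r * (#|V i| + 1))%N.
Proof.
move=> cov bal i.
apply: (@leq_trans (\sum_(k < r) #|V k|)).
  rewrite (eq_bigr (fun k => \sum_(x : T) (x \in V k : nat))%N); last first.
    move=> k _; rewrite -sum1_card big_mkcond; apply: eq_bigr => x _.
    by case: (x \in V k).
  rewrite exchange_big /= -sum1_card; apply: leq_sum => x _.
  have [k xk] := cov x.
  by rewrite (bigD1 k) //= xk leq_addr.
apply: (@leq_trans (\sum_(k < r) (#|V i| + 1))).
  by apply: leq_sum => k _; apply: bal.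
by rewrite sum_nat_const card_ord.
Qed.
End Count2.

Theorem lemma2p12 (R : realType) :
  forall d : R, 0 < d <= 1 ->
  exists eps0 : R, 0 < eps0 /\
  forall eps : R, 0 < eps <= eps0 ->
  exists r0 : nat, forall r : nat, (r0 <= r)%N ->
  exists zeta0 : R, 0 < zeta0 /\
  forall zeta : R, 0 < zeta <= zeta0 ->
  exists n0 : nat, forall n : nat, (n0 <= n)%N ->
  forall (T : finType) (e : rel T) (V : 'I_r -> {set T}),
    #|T| = n -> symmetric e -> irreflexive e ->
    (forall i j : 'I_r, i != j -> [disjoint V i & V j]) ->
    (forall x : T, exists i : 'I_r, x \in V i) ->
    (forall i j : 'I_r, (#|V i| <= #|V j| + 1)%N) ->
    rel_connected (reduced_rel e V eps d) ->
    ~ rel_bipartite (reduced_rel e V eps d) ->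
  exists L : nat, odd L /\ (L <= 2 * r)%N /\
    forall (i j : 'I_r) (X Y : {set T}),
      X \subset V i -> Y \subset V j ->
      d * #|V i|%:R <= #|X|%:R -> d * #|V j|%:R <= #|Y|%:R ->
      zeta * n%:R ^+ L.+1 <= (num_paths e L X Y)%:R.
Proof.
move=> d /andP [d0 d1].
exists (d / 4); split; first lra.
move=> eps /andP [ep epd].
exists 1%N => r r1.
set L := (2 * r).-1.
have LS : L.+1 = (2 * r)%N by rewrite /L prednK // muln_gt0.
have rpos : 0 < r%:R :> R by rewrite ltr0n.
set a : R := d ^+ 2 / (8 * r%:R).
have apos : 0 < a.
  apply: divr_gt0; first exact: exprn_gt0.
  by apply: mulr_gt0 => //; lra.
exists (a ^+ L.+1); split; first exact: exprn_gt0.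
move=> zeta /andP [z0 zz].
set N : R := 4 * r%:R * (L.+1)%:R / d ^+ 2.
exists (Num.truncn N).+1 => n hn T e V cardT esym eirr disj cov bal conn nb.
have nN : N < n%:R.
  by apply: lt_le_trans (truncnS_gt N) _; rewrite ler_nat.
exists L; split.
  by move: (congr1 odd LS); rewrite /= oddM andFb => /negbFE.
split; first exact: leq_pred.
move=> i j X Y sX sY hX hY.
have Wl : W (reduced_rel e V eps d) L i j.
  apply: full_walk => //; exact: rr_sym.
set q : R := n%:R / r%:R.
have hV : forall k, q - 1 <= #|V k|%:R.
  move=> k; have := part_size cov bal k; rewrite cardT -(ler_nat R) natrM natrD.
  move=> h; suff : q <= #|V k|%:R + 1 by lra.
  by rewrite /q ler_pdivrMr // mulrC.
have L2 : 2 <= (L.+1)%:R :> R.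
  by rewrite LS ler_nat leq_pmulr.
have hq : 4 * (L.+1)%:R <= d ^+ 2 * q.
  have d2 : 0 < d ^+ 2 by exact: exprn_gt0.
  have h := ltW nN.
  have := ler_wpM2r (ltW (divr_gt0 d2 rpos)) h.
  have -> : N * (d ^+ 2 / r%:R) = 4 * (L.+1)%:R.
    rewrite /N; field; apply/andP; split; rewrite ?expf_neq0 // ?gt_eqF //; lra.
  have -> : n%:R * (d ^+ 2 / r%:R) = d ^+ 2 * q.
    by rewrite /q; field; rewrite gt_eqF.
  done.
have dd1 : d ^+ 2 <= 1 by rewrite expr_le1 //; lra.
have ad : a * n%:R = d ^+ 2 / 8 * q.
  by rewrite /a /q; field; rewrite gt_eqF.
set delta := d / 2.
set beta := a * n%:R.
have b0 : 0 <= beta by apply: mulr_ge0; [lra | exact: ler0n].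
have hk : forall k, beta + L%:R <= (d - eps) * (delta * #|V k|%:R).
  move=> k; have hv := hV k.
  have v0 : 0 <= #|V k|%:R :> R by exact: ler0n.
  have dv : 0 <= d * #|V k|%:R by apply: mulr_ge0 => //; lra.
  have s1 : 3 / 8 * (d ^+ 2 * #|V k|%:R) <= (d - eps) * (delta * #|V k|%:R).
    rewrite /delta; nra.
  have s2 : d ^+ 2 * (q - 1) <= d ^+ 2 * #|V k|%:R.
    by apply: ler_wpM2l => //; exact: sqr_ge0.
  have LL : L%:R + 1 = (L.+1)%:R :> R by rewrite -natr1.
  rewrite /beta ad; move: s2; rewrite mulrBr mulr1 => s2.
  have e1 : d ^+ 2 / 8 * q = (d ^+ 2 * q) / 8 by rewrite mulrAC.
  rewrite e1; lra.
have hY' : delta * #|V j|%:R <= #|Y|%:R.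
  have hd : delta <= d by rewrite /delta; lra.
  by apply: le_trans hY; exact: (ler_wpM2r (ler0n R _) hd).
have ed : eps <= delta by rewrite /delta; lra.
have de : delta <= 1 - eps by rewrite /delta; lra.
have de0 : 0 <= d - eps by lra.
have [Z [sZ _ hZ1 pZ]] := claim ep ed de b0 de0 hk Wl sY hY'.
have hZ : (1 - eps) * #|V i|%:R <= #|Z|%:R by apply: hZ1; rewrite -ltnS LS; exact: leq_pmulr.
have hXZ : (d - eps) * #|V i|%:R <= #|X :&: Z|%:R.
  have hU : (#|X :|: Z| <= #|V i|)%N by apply: subset_leq_card; rewrite subUset sX.
  have := cardsUI X Z; move/(congr1 (fun m => m%:R : R)); rewrite !natrD => hc.
  move: hU; rewrite -(ler_nat R) => hU.
  move: hX hZ; rewrite mulrBl mul1r => hX hZ.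
  have : d * #|V i|%:R - eps * #|V i|%:R = (d - eps) * #|V i|%:R by rewrite mulrBl.
  lra.
have bXZ : beta <= #|X :&: Z|%:R.
  apply: le_trans hXZ.
  have hv := hV i.
  have v0 : 0 <= #|V i|%:R :> R by exact: ler0n.
  rewrite /beta ad.
  have q0 : 0 <= q by apply: divr_ge0; [exact: ler0n | exact: ltW].
  have q8 : 8 <= q.
    move: hq dd1 L2; set D := d ^+ 2; set M := (L.+1)%:R => hq dd1 L2; nra.
  have d2d : d ^+ 2 <= d by rewrite expr2; nra.
  move: d2d; set D := d ^+ 2 => d2d.
  nra.
have hf := @final R T e L X Z Y beta b0 pZ.
apply: le_trans hf.
apply: (@le_trans _ _ (beta ^+ L.+1)).
  rewrite /beta exprMn; apply: ler_wpM2r; first exact: exprn_ge0.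
  exact: zz.
rewrite exprS; apply: ler_wpM2r => //; exact: exprn_ge0.
Qed.
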